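(* For each $n\ge 2$, the number of non-periodic diameter-$4$ perfect Lee codes in $Z^n$ is $2^{\aleph_0}$.
   Context: Lee distance on $Z^n$: $\rho_L(v,w)=\sum_i|v_i-w_i|$; $S_{n,1}(v)=\{w:\rho_L(v,w)\le1\}$; for $\rho_L(v,w)=1$ the double-sphere is $DS_{n,1}(v,w)=S_{n,1}(v)\cup S_{n,1}(w)$. A copy of a set is its image under a linear distance-preserving bijection of $Z^n$; a tiling is a family of pairwise disjoint copies covering $Z^n$. A diameter-$4$ perfect Lee code in $Z^n$ is a set $\mathcal{L}$ with pairwise Lee distances $\ge 4$ such that there is a tiling of $Z^n$ by copies of $DS_{n,1}$ in which each tile contains exactly one element of $\mathcal{L}$ and distinct tiles contain distinct elements. A set $\mathcal{S}\subset Z^n$ is periodic if there is $p>0$ with $s\in\mathcal{S}\iff s+pe_i\in\mathcal{S}$ for all $i=1,\dots,n$; otherwise it is non-periodic. *)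

(* Defs.v *)
From mathcomp Require Import all_boot all_order all_algebra.
From mathcomp Require Import boolp classical_sets cardinality.
Set Implicit Arguments. Unset Strict Implicit. Unset Printing Implicit Defensive.
Import Order.TTheory GRing.Theory Num.Theory.
Local Open Scope ring_scope.
Local Open Scope classical_set_scope.

Definition Zn (n : nat) := 'rV[int]_n.

Definition lee n (v w : Zn n) : int := \sum_(i < n) `|v 0 i - w 0 i|.

Definition S1 n (v : Zn n) : set (Zn n) := [set w | lee v w <= 1].

(* double-sphere, for lee v w = 1 *)
Definition DS1 n (v w : Zn n) : set (Zn n) := S1 v `|` S1 w.

Definition lin_isometry n (f : Zn n -> Zn n) : Prop :=
  (forall x y, f (x + y) = f x + f y) /\
  (forall x y, lee (f x) (f y) = lee x y) /\ bijective f.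

Definition DS_copy n (T : set (Zn n)) : Prop :=
  exists v w f, lee v w = 1 /\ lin_isometry f /\ T = f @` DS1 v w.

Definition DS_tiling n (F : set (set (Zn n))) : Prop :=
  (forall T, F T -> DS_copy T) /\
  (forall T T', F T -> F T' -> T <> T' -> T `&` T' = set0) /\
  (forall x, exists2 T, F T & T x).

Definition perfect_lee_code_d4 n (L : set (Zn n)) : Prop :=
  (forall x y, L x -> L y -> x <> y -> 4 <= lee x y) /\
  exists F : set (set (Zn n)), DS_tiling F /\
    (forall T, F T -> exists! c, L c /\ T c) /\
    (forall T T' c c', F T -> F T' -> T <> T' -> L c -> T c -> L c' -> T' c' -> c <> c').

Definition periodic n (S : set (Zn n)) : Prop :=
  exists p : nat, (0 < p)%N /\
    forall (s : Zn n) (i : 'I_n), S s <-> S (s + (p%:Z) *: delta_mx 0 i).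

(* Main.v *)
Require Import Defs.
From mathcomp Require Import all_boot all_order all_algebra.
From mathcomp Require Import boolp classical_sets cardinality.
From mathcomp Require Import zify ring lra.
Set Implicit Arguments. Unset Strict Implicit. Unset Printing Implicit Defensive.
Import Order.TTheory GRing.Theory Num.Theory.
Local Open Scope ring_scope.
Local Open Scope classical_set_scope.


Definition lin n (F : 'I_n -> int) (v : Zn n) : int := \sum_i F i * v 0 i.
Definition n1 n (v : Zn n) : int := \sum_i `|v 0 i|.
Definition ek n (k : 'I_n) : Zn n := delta_mx 0 k.

Lemma linD n F (u v : Zn n) : lin F (u + v) = lin F u + lin F v.
Proof. by rewrite /lin -big_split; apply: eq_bigr => i _; rewrite mxE mulrDr. Qed.
Lemma linN n F (v : Zn n) : lin F (- v) = - lin F v.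
Proof. by rewrite /lin -sumrN; apply: eq_bigr => i _; rewrite mxE mulrN. Qed.
Lemma linB n F (u v : Zn n) : lin F (u - v) = lin F u - lin F v.
Proof. by rewrite linD linN. Qed.
Lemma sum_single n (f g : 'I_n -> int) i : (forall k, k != i -> f k = 0) ->
  \sum_k g k * f k = g i * f i.
Proof. move=> H; rewrite (bigD1 i) //= big1 ?addr0 // => k /H ->; exact: mulr0. Qed.
Lemma ek_val n (k i : 'I_n) : ek k 0 i = (i == k)%:R.
Proof. by rewrite /ek mxE eqxx. Qed.
Lemma lin_ek n F (k : 'I_n) : lin F (ek k) = F k.
Proof.
rewrite /lin (@sum_single n (fun i => ek k 0 i) F k).
  by rewrite ek_val eqxx mulr1.
by move=> i /negbTE ik; rewrite ek_val ik.
Qed.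
Lemma n1_ek n (k : 'I_n) : n1 (ek k) = 1.
Proof.
rewrite /n1 (bigD1 k) //= big1 ?addr0 ?ek_val ?eqxx //.
by move=> i /negbTE ik; rewrite ek_val ik.
Qed.
Lemma n1N n (v : Zn n) : n1 (- v) = n1 v.
Proof. by apply: eq_bigr => i _; rewrite mxE normrN. Qed.
Lemma n1D n (u v : Zn n) : n1 (u + v) <= n1 u + n1 v.
Proof. rewrite /n1 -big_split /=; apply: ler_sum => i _; rewrite mxE; exact: ler_normD. Qed.
Lemma n1_ge0 n (v : Zn n) : 0 <= n1 v.
Proof. by apply: sumr_ge0 => i _. Qed.
Lemma psi_n1 n (v : Zn n) : `|lin (fun _ => 1) v| <= n1 v.
Proof.
rewrite /lin; apply: le_trans (ler_norm_sum _ _ _) _.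
by apply: ler_sum => i _; rewrite mul1r.
Qed.
Lemma lee_n1 n (v w : Zn n) : lee v w = n1 (v - w).
Proof. by apply: eq_bigr => i _; rewrite !mxE. Qed.
Lemma leeC n (v w : Zn n) : lee v w = lee w v.
Proof. by rewrite !lee_n1 -n1N opprB. Qed.
Lemma lee_tri n (a b x : Zn n) : lee a b <= lee a x + lee x b.
Proof. rewrite !lee_n1; have -> : a - b = (a - x) + (x - b) by rewrite addrA subrK. exact: n1D. Qed.
Lemma lee_shift n (a b t : Zn n) : lee (a + t) (b + t) = lee a b.
Proof. by rewrite !lee_n1 opprD addrACA subrr addr0. Qed.
Lemma lee0 n (a : Zn n) : lee a a = 0.
Proof. by rewrite lee_n1 subrr /n1 big1 // => i _; rewrite mxE normr0. Qed.
Lemma lee_ekP n (a : Zn n) k : lee a (a + ek k) = 1.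
Proof. by rewrite lee_n1 opprD addNKr n1N n1_ek. Qed.
Lemma lee_ekN n (a : Zn n) k : lee a (a - ek k) = 1.
Proof. by rewrite lee_n1 opprB addrC subrK n1_ek. Qed.


Definition psi n (v : Zn n) := lin (fun _ => 1) v.
Definition wt n (v : Zn n) := lin (fun i : 'I_n => (i : nat)%:Z) v.

Lemma unit_sum n (f : 'I_n -> int) : (forall i, 0 <= f i) -> \sum_i f i = 1 ->
  exists i, f i = 1 /\ (forall k, k != i -> f k = 0).
Proof.
move=> f0 s1.
have : ~~ [forall i, f i == 0].
  apply/negP => /forallP H; move: s1; rewrite big1 // => i _; exact/eqP/H.
rewrite negb_forall => /existsP[i fi].
move: s1; rewrite (bigD1 i) //=; set S := (X in _ + X = _) => s1.
have r0 : 0 <= S by apply: sumr_ge0 => k _.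
have fi0 := f0 i; move/eqP: fi => fi.
have fi1 : f i = 1.
  lia.
exists i; split => //.
have : S = 0 by lia.
by move/(psumr_eq0P (fun k _ => f0 k)).
Qed.

Lemma lemma_c n (d : Zn n) (m : int) : n1 d <= 3 -> psi d = 0 -> wt d = m * n%:Z -> d = 0.
Proof.
move=> H3 Hp Hw.
pose a i := if 0 <= d 0 i then d 0 i else 0.
pose b i := if 0 <= d 0 i then 0 else - d 0 i.
have ha i : 0 <= a i by rewrite /a; case: ifP => // _.
have hb i : 0 <= b i by rewrite /b; case: ifP => // /negbT; rewrite -ltNge; lia.
have hd i : d 0 i = a i - b i by rewrite /a /b; case: ifP => _; rewrite ?subr0 ?sub0r ?opprK.
have habs i : `|d 0 i| = a i + b i.
  rewrite /a /b; case: ifP => h; first by rewrite addr0 ger0_norm.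
  by rewrite add0r ltr0_norm // ltNge h.
have hab i : a i = 0 \/ b i = 0 by rewrite /a /b; case: ifP; [right|left].
have En1 : n1 d = \sum_i a i + \sum_i b i by rewrite /n1 -big_split; apply: eq_bigr.
have Ep : psi d = \sum_i a i - \sum_i b i.
  by rewrite /psi /lin -sumrB; apply: eq_bigr => i _; rewrite mul1r.
have Ew : wt d = \sum_(i < n) (i : nat)%:Z * a i - \sum_(i < n) (i : nat)%:Z * b i.
  by rewrite /wt /lin -sumrB; apply: eq_bigr => i _; rewrite hd mulrBr.
have A0 : 0 <= \sum_i a i by apply: sumr_ge0.
have B0 : 0 <= \sum_i b i by apply: sumr_ge0.
have [AB0|AB1] : (\sum_i a i = 0 /\ \sum_i b i = 0) \/ (\sum_i a i = 1 /\ \sum_i b i = 1) by lia.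
  case: AB0 => /(psumr_eq0P (fun i _ => ha i)) Ha /(psumr_eq0P (fun i _ => hb i)) Hb.
  apply/matrixP => i j; rewrite ord1 mxE hd Ha // Hb //.
case: AB1 => /(unit_sum ha)[i [ai ao]] /(unit_sum hb)[j [bj bo]].
move: Ew; rewrite (sum_single _ ao) (sum_single _ bo) ai bj !mulr1 Hw => Ew.
have ij : i != j.
  apply/negP => /eqP eij; subst j; case: (hab i); lia.
have := ltn_ord i; have := ltn_ord j.
move: ij; rewrite -(inj_eq val_inj) /=.
move: (i : nat) (j : nat) Ew => i' j' Ew ij' lj li.
exfalso; move/eqP: ij' => ij'.
have n0 : (0 : int) <= n%:Z by [].
have [m0|[m1|m2]] : m = 0 \/ 1 <= m \/ m <= -1 by lia.
- by subst m; lia.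
- have := ler_wpM2r n0 m1; rewrite mul1r; lia.
- have := ler_wpM2r n0 m2; rewrite mulN1r; lia.
Qed.


Definition code n (tau : int -> bool) : set (Zn n.+1) :=
  [set c | exists k q : int, psi c = 4 * k /\ wt c = (if tau k then 1 else 0) + q * n.+1%:Z].

Definition e1 n : Zn n.+1 := ek ord0.

Lemma psi_ek n (k : 'I_n) : psi (ek k) = 1. Proof. exact: lin_ek. Qed.
Lemma wt_ek n (k : 'I_n) : wt (ek k) = (k : nat)%:Z. Proof. exact: lin_ek. Qed.
Lemma wt_e1 n : wt (e1 n) = 0. Proof. by rewrite /e1 wt_ek. Qed.

Lemma code_close n tau (c c' : Zn n.+1) : code tau c -> code tau c' -> lee c c' <= 3 -> c = c'.
Proof.
move=> [k [q [pc wc]]] [k' [q' [pc' wc']]] l3.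
have := psi_n1 (c - c'); rewrite -lee_n1 => hp.
have hp3 := le_trans hp l3.
move: hp3; rewrite -/(psi _) /psi linB -!/(psi _) pc pc' ler_norml => /andP[h1 h2].
have kk : k = k' by lia.
subst k'.
apply/eqP; rewrite -subr_eq0; apply/eqP.
apply: (@lemma_c _ _ (q - q')); first by rewrite -lee_n1.
  by rewrite /psi linB -!/(psi _) pc pc' subrr.
by rewrite /wt linB -!/(wt _) wc wc'; ring.
Qed.

Lemma tileP n (c x : Zn n.+1) : DS1 c (c + e1 n) x <-> lee c x <= 1 \/ lee (c + e1 n) x <= 1.
Proof. by []. Qed.

Lemma tile_close n tau (c c' x : Zn n.+1) : code tau c -> code tau c' ->
  DS1 c (c + e1 n) x -> DS1 c' (c' + e1 n) x -> c = c'.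
Proof.
move=> Cc Cc' /tileP hc /tileP hc'; apply: (code_close Cc Cc').
have e1c := lee_ekP c ord0; have e1c' := lee_ekP c' ord0.
rewrite -/(e1 n) in e1c e1c'.
case: hc => hc; case: hc' => hc'.
- have := lee_tri c c' x; rewrite (leeC x c'); lia.
- have := lee_tri c c' x; have := lee_tri x c' (c' + e1 n).
  rewrite (leeC x (c' + e1 n)) (leeC (c' + e1 n) c'); lia.
- have := lee_tri c c' (c + e1 n); have := lee_tri (c + e1 n) c' x.
  rewrite (leeC x c'); lia.
- rewrite -(lee_shift c c' (e1 n)).
  have := lee_tri (c + e1 n) (c' + e1 n) x; rewrite (leeC x (c' + e1 n)); lia.
Qed.


Lemma ord_rep n (z : int) : exists (i : 'I_n.+1) (q : int), z = (i : nat)%:Z + q * n.+1%:Z.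
Proof.
have N0 : (n.+1%:Z : int) != 0 by [].
have hm : 0 <= (z %% n.+1%:Z)%Z := modz_ge0 z N0.
have lt : (absz (z %% n.+1%:Z)%Z < n.+1)%N.
  by rewrite -ltz_nat abszE ger0_norm // ltz_mod.
exists (Ordinal lt), (z %/ n.+1%:Z)%Z => /=.
rewrite abszE ger0_norm // addrC; exact: divz_eq.
Qed.

Lemma cover_tile n tau (x : Zn n.+1) : exists c, code tau c /\ DS1 c (c + e1 n) x.
Proof.
set s := psi x.
set k := ((s + 1) %/ 4)%Z.
have hk : s + 1 = k * 4 + ((s + 1) %% 4)%Z by rewrite /k -divz_eq.
have m0 : 0 <= ((s + 1) %% 4)%Z by apply: modz_ge0.
have m4 : ((s + 1) %% 4)%Z < 4 by have := @ltz_mod (s + 1) 4; apply.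
set r : int := if tau k then 1 else 0.
set z := wt x - r.
have pe1 : psi (e1 n) = 1 by rewrite psi_ek.
have we1 := wt_e1 n.
have [j1|[j0|[jm|j2]]] : s - 4 * k = 1 \/ s - 4 * k = 0 \/ s - 4 * k = -1 \/ s - 4 * k = 2 by lia.
- have [i [q hz]] := ord_rep n z.
  exists (x - ek i); split.
    exists k, q; rewrite /psi linB -!/(psi _) psi_ek /wt linB -!/(wt _) wt_ek; split; lia.
  apply/tileP; left; rewrite -{2}(subrK (ek i) x) lee_ekP //.
- have [i [q hz]] := ord_rep n (- z).
  exists (x - (e1 n - ek i)); split.
    exists k, (- q); rewrite /psi !linB -!/(psi _) psi_ek pe1 /wt !linB -!/(wt _) wt_ek we1.
    split; lia.
  apply/tileP; right; rewrite -{2}(subrK (e1 n - ek i) x) addrA lee_ekN //.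
- have [i [q hz]] := ord_rep n (- z).
  exists (x + ek i); split.
    exists k, (- q); rewrite /psi !linD -!/(psi _) psi_ek /wt !linD -!/(wt _) wt_ek.
    split; lia.
  apply/tileP; left; rewrite -{2}(addrK (ek i) x) lee_ekN //.
- have [i [q hz]] := ord_rep n z.
  exists (x - (e1 n + ek i)); split.
    exists k, q; rewrite /psi !linB !linD -!/(psi _) psi_ek pe1 /wt !linB !linD -!/(wt _) wt_ek we1.
    split; lia.
  apply/tileP; right; rewrite -{2}(subrK (e1 n + ek i) x) addrA lee_ekP //.
Qed.


Lemma code_perfect n tau : perfect_lee_code_d4 (code (n := n) tau).
Proof.
have self c : DS1 c (c + e1 n) c by apply/tileP; left; rewrite lee0.
split.
  move=> x y Cx Cy xy; rewrite leNgt; apply/negP => h.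
  by apply: xy; apply: (code_close Cx Cy); lia.
exists [set T | exists2 c, code tau c & T = DS1 c (c + e1 n)].
split; [split; [|split]|split].
- move=> T [c Cc ->]; exists c, (c + e1 n), id; split; first exact: lee_ekP.
  split; last by rewrite image_id.
  by split => //; split => //; exists id.
- move=> T T' [c Cc ->] [c' Cc' ->] neq.
  apply/seteqP; split => x // [h h']; apply: neq.
  by rewrite (tile_close Cc Cc' h h').
- by move=> x; have [c [Cc h]] := cover_tile tau x; exists (DS1 c (c + e1 n)) => //; exists c.
- move=> T [c Cc ->]; exists c; split; first by split.
  by move=> c' [Cc' h]; apply: (tile_close Cc Cc' h).
- move=> T T' c c' [c0 C0 ->] [c1 C1 ->] neq Cc h Cc' h' ecc; subst c'.
  by apply: neq; rewrite (tile_close C0 C1 h h').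
Qed.


Definition tau (g : nat -> bool) (k : int) : bool :=
  if k < 0 then false else if k == 0 then true else g (absz k).-1.

Lemma linZ n F a (v : Zn n) : lin F (a *: v) = a * lin F v.
Proof. by rewrite /lin mulr_sumr; apply: eq_bigr => i _; rewrite mxE mulrCA. Qed.

Definition sp n (t : int) : Zn n.+1 := t *: e1 n + ek (inord 1).

Lemma memP n g t : (1 <= n)%N ->
  code (tau g) (sp n t) <-> exists k, t + 1 = 4 * k /\ tau g k.
Proof.
move=> n1.
have ps : psi (sp n t) = t + 1.
  by rewrite /psi /sp linD linZ -!/(psi _) !psi_ek mulr1.
have ws : wt (sp n t) = 1.
  by rewrite /wt /sp linD linZ -!/(wt _) wt_e1 wt_ek inordK // mulr0 add0r.
split.
  move=> [k [q [hp hw]]]; exists k; split; first by rewrite -ps.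
  move: hw; rewrite ws; case: (tau g k) => // hw; exfalso.
  have N0 : (0 : int) <= n.+1%:Z by [].
  have [q0|q1] : q <= 0 \/ 1 <= q by lia.
  - have := ler_wpM2r N0 q0; rewrite mul0r; lia.
  - have := ler_wpM2r N0 q1; rewrite mul1r; lia.
move=> [k [hk tk]]; exists k, 0; split; first by rewrite ps.
by rewrite ws tk mul0r addr0.
Qed.

Lemma tau_pos g (m : nat) : tau g (m.+1)%:Z = g m.
Proof. by []. Qed.

Lemma memP' n g (m : nat) : (1 <= n)%N -> code (tau g) (sp n (4 * m%:Z + 3)) <-> g m.
Proof.
move=> n1; rewrite memP //; split.
  move=> [k [hk tk]]; have ek : k = (m.+1)%:Z by lia.
  by rewrite -tau_pos -ek.
by move=> gm; exists (m.+1)%:Z; split; [lia | rewrite tau_pos].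
Qed.

Lemma nonper n g : (1 <= n)%N -> ~ periodic (code (n := n) (tau g)).
Proof.
move=> n1 [p [p0 H]].
set P := fun t => code (tau g) (sp n t).
have HP t : P t <-> P (t + p%:Z).
  rewrite /P; have := H (sp n t) ord0.
  by rewrite /sp /e1 /ek addrAC -scalerDl.
have HPm (m : nat) t : P t <-> P (t + m%:Z * p%:Z).
  elim: m t => [|m IH] t; first by rewrite mul0r addr0.
  rewrite IH HP; have -> : t + m%:Z * p%:Z + p%:Z = t + m.+1%:Z * p%:Z by lia.
  by [].
have P1 : P (-1) by rewrite /P memP //; exists 0; split.
have := HPm 4%N (-1 - 4 * p%:Z).
have -> : -1 - 4 * p%:Z + (4%N)%:Z * p%:Z = -1 by lia.
move=> [_ /(_ P1)]; rewrite /P memP // => -[k [hk tk]].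
move: tk; rewrite /tau; have -> : k < 0 by lia.
by [].
Qed.

Lemma inj_le T U (A : set T) (B : set U) (f : T -> U) :
  {in A &, injective f} -> (forall x, A x -> B (f x)) -> (A #<= B)%card.
Proof.
move=> fi fAB; rewrite -(card_le_eql (inj_card_eq fi)).
by apply: subset_card_le => _ [x Ax <-]; exact: fAB.
Qed.

Lemma code_inj n : (1 <= n)%N -> injective (fun g => code (n := n) (tau g)).
Proof.
move=> n1 g g' E; apply/funext => m.
have h1 := memP' g m n1; have h2 := memP' g' m n1.
rewrite /= in E; rewrite E in h1.
have h : g m <-> g' m by rewrite -h1 -h2.
by case: (g m) (g' m) h => [] [] [h3 h4] //; [have := h3 isT | have := h4 isT].
Qed.

Local Close Scope ring_scope.
Local Open Scope card_scope.

Theorem corollary2 (n : nat) : (2 <= n)%N ->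
  [set L : set (Zn n) | ~ periodic L /\ perfect_lee_code_d4 L]
    #= [set: nat -> bool].
Proof.
case: n => [|n] // hn.
have n1 : (1 <= n)%N by [].
apply/card_eqPle; split.
  pose h (L : set (Zn n.+1)) : nat -> bool :=
    fun m => if unpickle m is Some x then `[< L x >] else false.
  apply: (@inj_le _ _ _ _ h) => // L L' _ _ E.
  apply/funext => x; apply/propext.
  have := congr1 (fun f => f (pickle x)) E. rewrite /h /=. rewrite (@pickleK _ x).
  move=> e; split => H.
    have : `[< L x >] by apply/asboolP.
    by rewrite e => /asboolP.
  have : `[< L' x >] by apply/asboolP.
  by rewrite -e => /asboolP.
apply: (@inj_le _ _ _ _ (fun g => code (n := n) (tau g))).
  by move=> g g' _ _; apply: code_inj.
by move=> g _; split; [exact: nonper | exact: code_perfect].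
Qed.
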